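(* Let $n,d\in\mathbb N$, $t\in[0,1]$, weights $\omega_0,\ldots,\omega_n>0$ and points $\mathbf W_0,\ldots,\mathbf W_n\in\mathbb R^d$ be given. Let $B^n_k(t):=\binom nk t^k(1-t)^{n-k}$ and $$\mathbf R_n(t):=\frac{\sum_{k=0}^n\omega_k\mathbf W_kB^n_k(t)}{\sum_{k=0}^n\omega_kB^n_k(t)}.$$ Define $h_0:=1$, $\mathbf Q_0:=\mathbf W_0$ and, for $k=1,\ldots,n$, $$h_k:=\frac{\omega_kh_{k-1}t(n-k+1)}{\omega_{k-1}k(1-t)+\omega_kh_{k-1}t(n-k+1)},\qquad \mathbf Q_k:=(1-h_k)\mathbf Q_{k-1}+h_k\mathbf W_k.$$ Then for all $k=0,1,\ldots,n$: $h_k\in[0,1]$, $\mathbf Q_k\in\mathbb R^d$, and $\mathbf Q_k\in\operatorname{conv}\{\mathbf W_0,\ldots,\mathbf W_k\}$ (so $\operatorname{conv}\{\mathbf Q_0,\ldots,\mathbf Q_k\}\subseteq\operatorname{conv}\{\mathbf W_0,\ldots,\mathbf W_k\}$). Moreover, $\mathbf R_n(t)=\mathbf Q_n$.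
   Context: $\operatorname{conv}$ denotes the convex hull; $\mathbb E^d$ of the paper is identified with $\mathbb R^d$. $\mathbf R_n$ is the rational Bézier curve of degree $n$ with the given weights and control points. *)

(* Defs.v *)
From mathcomp Require Import all_boot all_order all_algebra.
Set Implicit Arguments. Unset Strict Implicit. Unset Printing Implicit Defensive.
Import Order.TTheory GRing.Theory Num.Theory.
Local Open Scope ring_scope.

Definition bernstein (R : ringType) (n k : nat) (t : R) : R :=
  'C(n, k)%:R * t ^+ k * (1 - t) ^+ (n - k).

Definition rat_bezier (R : fieldType) (d n : nat) (w : nat -> R)
  (W : nat -> 'rV[R]_d) (t : R) : 'rV[R]_d :=
  (\sum_(k < n.+1) w k * bernstein n k t)^-1 *:
    \sum_(k < n.+1) (w k * bernstein n k t) *: W k.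

Fixpoint hcoef (R : fieldType) (n : nat) (w : nat -> R) (t : R) (k : nat) : R :=
  match k with
  | 0 => 1
  | k'.+1 =>
      let hp := hcoef n w t k' in
      let num := w k'.+1 * hp * t * (n - k'.+1 + 1)%:R in
      num / (w k' * (k'.+1)%:R * (1 - t) + num)
  end.

Fixpoint Qpt (R : fieldType) (d n : nat) (w : nat -> R) (W : nat -> 'rV[R]_d)
  (t : R) (k : nat) : 'rV[R]_d :=
  match k with
  | 0 => W 0
  | k'.+1 => (1 - hcoef n w t k'.+1) *: Qpt n w W t k' + hcoef n w t k'.+1 *: W k'.+1
  end.

Definition in_conv (R : numDomainType) (d : nat) (P : nat -> 'rV[R]_d) (k : nat)
  (x : 'rV[R]_d) : Prop :=
  exists lam : nat -> R,
    (forall i, (i <= k)%N -> 0 <= lam i) /\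
    \sum_(i < k.+1) lam i = 1 /\
    x = \sum_(i < k.+1) lam i *: P i.

(* Main.v *)
Require Import Defs.
From mathcomp Require Import all_boot all_order all_algebra.
From mathcomp Require Import ring lra zify.
Set Implicit Arguments. Unset Strict Implicit.
Import Order.TTheory GRing.Theory Num.Theory.
Local Open Scope ring_scope.

Lemma bern_step (R : comNzRingType) n k (t : R) : (k < n)%N ->
  (k.+1)%:R * (1 - t) * bernstein n k.+1 t = (n - k)%:R * t * bernstein n k t.
Proof.
move=> kn; rewrite /bernstein.
have e : ((k.+1)%:R * 'C(n, k.+1)%:R = (n - k)%:R * 'C(n, k)%:R :> R).
  by rewrite -!natrM mul_bin_left.
have -> : (n - k = (n - k.+1).+1)%N by lia.
move: e; have -> : (n - k = (n - k.+1).+1)%N by lia.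
move: ((k.+1)%:R : R) ('C(n, k.+1)%:R : R) (((n - k.+1).+1)%:R : R) ('C(n, k)%:R : R) => a b c e E.
rewrite !exprS.
transitivity ((a * b) * (t * t ^+ k * ((1 - t) * (1 - t) ^+ (n - k.+1)))); first ring.
by rewrite E; ring.
Qed.

Definition Ssum (R : nzRingType) n (w : nat -> R) t j :=
  \sum_(i < j.+1) w i * bernstein n i t.
Definition Tsum (R : nzRingType) d n (w : nat -> R) (W : nat -> 'rV[R]_d) t j :=
  \sum_(i < j.+1) (w i * bernstein n i t) *: W i.

Lemma bern_ge0 (R : realFieldType) n k (t : R) : 0 <= t <= 1 -> 0 <= bernstein n k t.
Proof.
move=> /andP[t0 t1]; rewrite /bernstein.
by rewrite !mulr_ge0 // exprn_ge0 // subr_ge0.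
Qed.

Lemma Spos (R : realFieldType) n (w : nat -> R) t k : 0 <= t -> t < 1 ->
  (forall k, (k <= n)%N -> 0 < w k) -> (k <= n)%N -> 0 < Ssum n w t k.
Proof.
move=> t0 t1 wp kn; rewrite /Ssum big_ord_recl /=.
apply: ltr_wpDr.
  apply: sumr_ge0 => i _; apply: mulr_ge0.
  apply/ltW/wp; apply: leq_trans kn; exact: ltn_ord.
  by apply: bern_ge0; rewrite t0 ltW.
apply: mulr_gt0; first by apply: wp.
by rewrite /bernstein bin0 expr0 !mul1r exprn_gt0 // subr_gt0.
Qed.

Lemma alg_key (F : comNzRingType) (a b h t m c S P Q : F) :
  h * S = a * P -> c * (1 - t) * Q = m * t * P ->
  b * h * t * m * (S + b * Q) = b * Q * (a * c * (1 - t) + b * h * t * m).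
Proof.
move=> hS E.
have key : b * h * t * m * S = b * Q * (a * c * (1 - t)).
  transitivity (b * t * m * (h * S)); first ring.
  rewrite hS; transitivity (b * a * (m * t * P)); first ring.
  rewrite -E; ring.
transitivity (b * h * t * m * S + b * h * t * m * (b * Q)); first ring.
rewrite key; ring.
Qed.

Lemma inv_lt1 (R : realFieldType) d n t (w : nat -> R) (W : nat -> 'rV[R]_d) :
  0 <= t -> t < 1 -> (forall k, (k <= n)%N -> 0 < w k) ->
  forall k, (k <= n)%N ->
  hcoef n w t k * Ssum n w t k = w k * bernstein n k t /\
  Ssum n w t k *: Qpt n w W t k = Tsum n w W t k.
Proof.
move=> t0 t1 wp; elim=> [|k IH] kn.
  by rewrite /Ssum /Tsum !big_ord1 /= mul1r.
have kn' : (k <= n)%N by apply: ltnW.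
have [IHh IHq] := IH kn'.
have Sp := Spos t0 t1 wp kn'.
set h := hcoef n w t k in IHh IHq *.
set S := Ssum n w t k in IHh IHq Sp *.
set a := w k; set b := w k.+1; set P := bernstein n k t; set Q := bernstein n k.+1 t.
have SS : Ssum n w t k.+1 = S + b * Q by rewrite /Ssum big_ord_recr.
have TS : Tsum n w W t k.+1 = Tsum n w W t k + (b * Q) *: W k.+1
  by rewrite /Tsum big_ord_recr.
have E := bern_step t kn; rewrite -/P -/Q in E.
have hE : h = a * P / S by rewrite -IHh mulfK // gt_eqF.
have h0 : 0 <= h.
  rewrite hE; apply: divr_ge0; last exact: ltW.
  by apply: mulr_ge0; [apply/ltW/wp | apply: bern_ge0; rewrite t0 ltW].
have m_eq : (n - k.+1 + 1 = n - k)%N by lia.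
set m := ((n - k)%:R : R).
have hdef : hcoef n w t k.+1 = b * h * t * m / (a * (k.+1)%:R * (1 - t) + b * h * t * m).
  by rewrite /= m_eq.
have den0 : 0 < a * (k.+1)%:R * (1 - t) + b * h * t * m.
  apply: ltr_pwDl.
    apply: mulr_gt0; last by rewrite subr_gt0.
    by apply: mulr_gt0; [apply/wp/ltnW | rewrite ltr0n].
  apply: mulr_ge0; last exact: ler0n.
  apply: mulr_ge0; last exact: t0.
  by apply: mulr_ge0; [apply/ltW/wp|exact: h0].
have h'S : hcoef n w t k.+1 * Ssum n w t k.+1 = b * Q.
  apply: (mulIf (negbT (gt_eqF den0))); rewrite hdef SS /=.
  rewrite mulrAC divfK ?gt_eqF //.
  exact: (alg_key b IHh E).
split=> //.
rewrite [Qpt _ _ _ _ _]/= scalerDr !scalerA.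
have -> : Ssum n w t k.+1 * (1 - hcoef n w t k.+1) = S.
  by rewrite mulrBr mulr1 mulrC h'S SS addrK.
by rewrite mulrC h'S IHq TS.
Qed.

Lemma delta_v (R : nzRingType) (V : lmodType R) j (F : nat -> V) :
  \sum_(i < j.+1) (((i : nat) == j)%:R : R) *: F i = F j.
Proof.
rewrite big_ord_recr /= eqxx scale1r big1 ?add0r // => i _.
by rewrite ltn_eqF // scale0r.
Qed.

Lemma delta_s (R : nzRingType) j (F : nat -> R) :
  \sum_(i < j.+1) F i * (((i : nat) == j)%:R : R) = F j.
Proof.
rewrite big_ord_recr /= eqxx mulr1 big1 ?add0r // => i _.
by rewrite ltn_eqF // mulr0.
Qed.

Lemma bern1 (R : nzRingType) n i : (i <= n)%N -> bernstein n i (1 : R) = (i == n)%:R.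
Proof.
move=> iN; rewrite /bernstein subrr expr0n expr1n mulr1.
have [->|ne] := eqVneq i n; first by rewrite binn subnn eqxx mulr1.
have -> : (n - i == 0)%N = false by apply/negbTE; lia.
by rewrite mulr0.
Qed.

Lemma h_one (R : realFieldType) n (w : nat -> R) :
  (forall k, (k <= n)%N -> 0 < w k) -> forall k, (k <= n)%N -> hcoef n w 1 k = 1.
Proof.
move=> wp; elim=> [|k IH] kn //.
rewrite /= IH ?(ltnW kn) // subrr mulr0 add0r divff // !mulr1.
rewrite mulf_neq0 //; first by rewrite gt_eqF // wp.
by rewrite pnatr_eq0 addn1.
Qed.

Lemma Q_one (R : realFieldType) d n (w : nat -> R) (W : nat -> 'rV[R]_d) :
  (forall k, (k <= n)%N -> 0 < w k) -> forall k, (k <= n)%N -> Qpt n w W 1 k = W k.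
Proof.
move=> wp; elim=> [|k IH] kn //.
have -> : Qpt n w W 1 k.+1 = (1 - hcoef n w 1 k.+1) *: Qpt n w W 1 k + hcoef n w 1 k.+1 *: W k.+1 by [].
by rewrite h_one // subrr scale0r add0r scale1r.
Qed.
Lemma wsum (V : zmodType) j k (F : nat -> V) : (j <= k)%N ->
  \sum_(i < k.+1) (if (i < j.+1)%N then F i else 0) = \sum_(i < j.+1) F i.
Proof.
move=> jk; rewrite -big_mkcond /= (big_ord_widen k.+1 F) //.
Qed.

Lemma conv_trans (R : numDomainType) d (P W : nat -> 'rV[R]_d) (c : nat -> nat -> R) k x :
 (forall j, (j <= k)%N -> (forall i, (i <= j)%N -> 0 <= c j i) /\
    \sum_(i < j.+1) c j i = 1 /\ P j = \sum_(i < j.+1) c j i *: W i) ->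
 in_conv P k x -> in_conv W k x.
Proof.
move=> H [mu [mu0 [mu1 ->]]].
pose l j i := if (i < j.+1)%N then c j i else 0.
have Hl : forall j, (j <= k)%N -> (forall i, 0 <= l j i) /\
   \sum_(i < k.+1) l j i = 1 /\ P j = \sum_(i < k.+1) l j i *: W i.
  move=> j jk; have [H0 [H1 H2]] := H j jk; split; last split.
  - by move=> i; rewrite /l; case: ifP => // ij; apply: H0.
  - by rewrite /l (@wsum R j k (c j) jk).
  - rewrite (eq_bigr (fun i : 'I_k.+1 => if (i < j.+1)%N then c j i *: W i else 0)).
      by rewrite (@wsum _ j k (fun i => c j i *: W i) jk).
    by move=> i _; rewrite /l; case: ifP => //; rewrite scale0r.
exists (fun i => \sum_(j < k.+1) mu j * l j i); split; last split.
- move=> i _; apply: sumr_ge0 => j _; apply: mulr_ge0.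
    by apply: mu0; rewrite -ltnS.
  by have [] := Hl j (ltn_ord j).
- rewrite exchange_big /= -mu1; apply: eq_bigr => j _.
  by rewrite -mulr_sumr (Hl j (ltn_ord j)).2.1 mulr1.
- under [RHS]eq_bigr do rewrite scaler_suml.
  rewrite [RHS]exchange_big /=; apply: eq_bigr => j _.
  rewrite (Hl j (ltn_ord j)).2.2 scaler_sumr; apply: eq_bigr => i _.
  by rewrite scalerA.
Qed.

Theorem theorem3 (R : realFieldType) (n d : nat) (t : R) (w : nat -> R)
  (W : nat -> 'rV[R]_d) :
  0 <= t <= 1 ->
  (forall k, (k <= n)%N -> 0 < w k) ->
  (forall k, (k <= n)%N ->
     [/\ 0 <= hcoef n w t k <= 1,
         in_conv W k (Qpt n w W t k) &
         forall x, in_conv (Qpt n w W t) k x -> in_conv W k x]) /\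
  rat_bezier n w W t = Qpt n w W t n.
Proof.
move=> /andP[t0 t1] wp.
have [tlt|tge] := ltP t 1.
  have I := inv_lt1 W t0 tlt wp.
  pose c j i := (Ssum n w t j)^-1 * (w i * bernstein n i t).
  have Hc : forall j, (j <= n)%N -> (forall i, (i <= j)%N -> 0 <= c j i) /\
      \sum_(i < j.+1) c j i = 1 /\ Qpt n w W t j = \sum_(i < j.+1) c j i *: W i.
    move=> j jn; have Sp := Spos t0 tlt wp jn.
    split; last split.
    - move=> i ij; apply: mulr_ge0; first by rewrite invr_ge0 ltW.
      apply: mulr_ge0; first by apply/ltW/wp/(leq_trans ij).
      by apply: bern_ge0; rewrite t0 ltW.
    - by rewrite /c -mulr_sumr mulVf // gt_eqF.
    - rewrite -[Qpt _ _ _ _ _]scale1r -(mulVf (negbT (gt_eqF Sp))) -scalerA (I j jn).2.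
      by rewrite /Tsum scaler_sumr; apply: eq_bigr => i _; rewrite scalerA.
  split; last first.
    have Sp := Spos t0 tlt wp (leqnn n).
    change ((Ssum n w t n)^-1 *: Tsum n w W t n = Qpt n w W t n).
    by rewrite -(I n (leqnn n)).2 scalerA mulVf ?scale1r // gt_eqF.
  move=> k kn; have Sp := Spos t0 tlt wp kn.
  have hE : hcoef n w t k = w k * bernstein n k t / Ssum n w t k.
    by rewrite -(I k kn).1 mulfK // gt_eqF.
  have wB : 0 <= w k * bernstein n k t.
    by apply: mulr_ge0; [apply/ltW/wp | apply: bern_ge0; rewrite t0 ltW].
  split.
  - rewrite hE divr_ge0 ?(ltW Sp) //= ler_pdivrMr // mul1r.
    rewrite /Ssum big_ord_recr /=; apply: ler_wpDl => //.
    apply: sumr_ge0 => i _; apply: mulr_ge0.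
      by apply/ltW/wp; apply: leq_trans kn; apply: ltnW.
    by apply: bern_ge0; rewrite t0 ltW.
  - have [H0 [H1 H2]] := Hc k kn.
    by exists (c k); split => //; split.
  - move=> x Hx; apply: (@conv_trans _ _ _ W c k x) Hx => j jk; apply: Hc; exact: leq_trans kn.
have t1' : t = 1 by apply/eqP; rewrite eq_le t1 tge.
subst t.
pose c j i := (((i : nat) == j)%:R : R).
have Hc : forall j, (j <= n)%N -> (forall i, (i <= j)%N -> 0 <= c j i) /\
    \sum_(i < j.+1) c j i = 1 /\ Qpt n w W 1 j = \sum_(i < j.+1) c j i *: W i.
  move=> j jn; split; last split.
  - by move=> i _; rewrite /c ler0n.
  - rewrite -[RHS](delta_s j (fun _ => 1)); apply: eq_bigr => i _; by rewrite mul1r.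
  - by rewrite /c (delta_v j W) Q_one.
split; last first.
  rewrite /rat_bezier Q_one //.
  rewrite (eq_bigr (fun i : 'I_n.+1 => w i * (((i : nat) == n)%:R : R))); last first.
    by move=> i _; rewrite bern1 // -ltnS.
  rewrite (eq_bigr (fun i : 'I_n.+1 => (((i : nat) == n)%:R : R) *: (w i *: W i))); last first.
    by move=> i _; rewrite bern1 ?scalerA 1?mulrC // -ltnS.
  by rewrite (delta_s n w) (delta_v n (fun i => w i *: W i)) scalerA mulVf ?scale1r // gt_eqF ?wp.
move=> k kn; split.
- by rewrite h_one // ler01 lexx.
- by have [H0 [H1 H2]] := Hc k kn; exists (c k); split => //; split.
- move=> x Hx; apply: (@conv_trans _ _ _ W c k x) Hx => j jk; apply: Hc; exact: leq_trans kn.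
Qed.
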